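(* Let $F\ge1$ and let $n_1,\dots,n_F$ be positive integers with $n_1\ge2$. With $p_a,q_a,r,r^{(2)}$ as in the context, define $$A_F=\sum_{a=1}^{F-1}(-1)^{a+1}\frac{1}{p_aq_a}+(-1)^{F+1}\frac{1}{p_F r}.$$ Then $A_F=r^{(2)}/r$.
   Context: For $1\le k\le a\le F$, let $p^{(k)}_a/q^{(k)}_a$ (coprime positive integers) equal the continued fraction $[n_a,\dots,n_k]:=1/(n_a+1/(n_{a-1}+\cdots+1/n_k))$, $[n_k]=1/n_k$; write $p_a=p^{(1)}_a$, $q_a=q^{(1)}_a$. Set $r^{(k)}=p^{(k)}_F+q^{(k)}_F$ for $1\le k\le F$, $r^{(F+1)}=1$, and $r=r^{(1)}$ (so $r^{(2)}=1$ when $F=1$). *)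

(* Defs.v *)
From mathcomp Require Import all_boot all_order all_algebra.
Set Implicit Arguments. Unset Strict Implicit. Unset Printing Implicit Defensive.
Import Order.TTheory GRing.Theory Num.Theory.
Local Open Scope ring_scope.

(* The sequence n_1, ..., n_F is a function n : nat -> nat (indices 1..F used). *)

(* cf_aux n k d = [n_(k+d), ..., n_k] = 1/(n_(k+d) + 1/( ... + 1/n_k)) *)
Fixpoint cf_aux (n : nat -> nat) (k d : nat) : rat :=
  match d with
  | 0 => ((n k)%:R)^-1
  | d'.+1 => ((n (k + d)%N)%:R + cf_aux n k d')^-1
  end.

(* [n_a, ..., n_k] for k <= a *)
Definition cf (n : nat -> nat) (k a : nat) : rat := cf_aux n k (a - k).

Definition pk (n : nat -> nat) (k a : nat) : int := numq (cf n k a).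
Definition qk (n : nat -> nat) (k a : nat) : int := denq (cf n k a).

Definition rk (n : nat -> nat) (F k : nat) : int :=
  if (k <= F)%N then pk n k F + qk n k F else 1.

Definition A_F (n : nat -> nat) (F : nat) : rat :=
  \sum_(1 <= a < F) (-1) ^+ (a + 1) / ((pk n 1 a)%:~R * (qk n 1 a)%:~R)
  + (-1) ^+ (F + 1) / ((pk n 1 F)%:~R * (rk n F 1)%:~R).

(* Main.v *)
Require Import Defs.
From mathcomp Require Import all_boot all_order all_algebra.
From mathcomp Require Import ring lra zify.
Import Order.TTheory GRing.Theory Num.Theory.
Local Open Scope ring_scope.

Fixpoint D (n : nat -> nat) (k d : nat) : nat :=
  match d with
  | 0 => 0
  | d1.+1 => match d1 with
             | 0 => 1
             | d'.+1 => n (k + d')%N * D n k d1 + D n k d'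
             end
  end.

Lemma DSS n k d : D n k d.+2 = (n (k + d)%N * D n k d.+1 + D n k d)%N.
Proof. by []. Qed.

Lemma Dpos n k d : (forall i, (i < d)%N -> (0 < n (k + i)%N)%N) -> (0 < D n k d.+1)%N.
Proof.
elim: d => [//|d IH] H.
rewrite DSS.
have h1 := IH (fun i hi => H i (ltnW hi)).
have h2 := H d (ltnSn d).
have := muln_gt0 (n (k+d)%N) (D n k d.+1). rewrite h1 h2 /=. lia.
Qed.

Lemma Dcop n k d : coprime (D n k d.+1) (D n k d.+2).
Proof.
elim: d => [|d IH]; first by rewrite /coprime gcd1n.
rewrite /coprime DSS gcdnMDl gcdnC. exact: IH.
Qed.

Lemma cfD n k d : (forall i, (i <= d)%N -> (0 < n (k + i)%N)%N) ->
  cf_aux n k d = (D n k d.+1)%:R / (D n k d.+2)%:R.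
Proof.
elim: d => [|d IH] H.
  by rewrite /= addn0 muln1 addn0 mul1r.
have -> : cf_aux n k d.+1 = ((n (k+d.+1)%N)%:R + cf_aux n k d)^-1 by [].
rewrite IH; last by move=> i hi; apply: H; lia.
have p2 : (D n k d.+2)%:R != 0 :> rat.
  rewrite pnatr_eq0 -lt0n; apply: Dpos => i hi; apply: H; lia.
have p3 : (D n k d.+3)%:R != 0 :> rat.
  rewrite pnatr_eq0 -lt0n; apply: Dpos => i hi; apply: H; lia.
move: p3; rewrite (DSS n k d.+1) natrD natrM => p3.
set a := (D n k d.+1)%:R; set b := (D n k d.+2)%:R; set c := (n (k + d.+1)%N)%:R.
rewrite -/c in p3 *.
have e : c + a / b = (c * b + a) / b by field.
by rewrite e invf_div.
Qed.


Lemma pkqk n k a : (k <= a)%N -> (forall i, (k <= i <= a)%N -> (0 < n i)%N) ->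
  pk n k a = (D n k (a - k).+1)%:Z /\ qk n k a = (D n k (a - k).+2)%:Z.
Proof.
move=> ka H.
have H' : forall i, (i <= a - k)%N -> (0 < n (k + i)%N)%N.
  move=> i hi; apply: H; lia.
have pos : (0 < D n k (a - k).+2)%N by apply: Dpos => i hi; apply: H'; lia.
have cop := Dcop n k (a - k).
have e : cf n k a = ((D n k (a - k).+1)%:Z)%:~R / ((D n k (a - k).+2)%:Z)%:~R.
  by rewrite /cf (@cfD n k (a - k) H').
rewrite /pk /qk e; split.
  rewrite coprimeq_num //; rewrite gtr0_sg ?mul1r //.
rewrite coprimeq_den //.
have -> : ((D n k (a - k).+2)%:Z == 0) = false by rewrite eqz_nat; lia.
by [].
Qed.

Lemma det n a : (D n 2 a.+1)%:R * (D n 1 a.+1)%:R - (D n 2 a)%:R * (D n 1 a.+2)%:R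
   = (-1) ^+ a :> rat.
Proof.
elim: a => [|a IH].
  by rewrite /= mul0r subr0 mulr1.
have e1 : (D n 2 a.+2)%:R = (n (2 + a)%N)%:R * (D n 2 a.+1)%:R + (D n 2 a)%:R :> rat.
  by rewrite DSS natrD natrM.
have e2 : (D n 1 a.+3)%:R = (n (2 + a)%N)%:R * (D n 1 a.+2)%:R + (D n 1 a.+1)%:R :> rat.
  by rewrite DSS natrD natrM.
rewrite e1 e2 exprS -IH.
ring.
Qed.

Lemma sumD n m : (forall i, (1 <= i <= m.+1)%N -> (0 < n i)%N) ->
  (\sum_(1 <= a < m.+1) (-1) ^+ (a + 1) / ((D n 1 a)%:R * (D n 1 a.+1)%:R) : rat)
  = (D n 2 m)%:R / (D n 1 m.+1)%:R.
Proof.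
elim: m => [|m IH] H.
  by rewrite big_geq // mul0r.
rewrite big_nat_recr // IH; last by move=> i hi; apply: H; lia.
have p1 : (D n 1 m.+1)%:R != 0 :> rat.
  rewrite pnatr_eq0 -lt0n; apply: Dpos => i hi; apply: H; lia.
have p2 : (D n 1 m.+2)%:R != 0 :> rat.
  rewrite pnatr_eq0 -lt0n; apply: Dpos => i hi; apply: H; lia.
have d := det n m.
have -> : ((-1) ^+ (m.+1 + 1) : rat) = (-1) ^+ m by rewrite addn1 !exprS mulrA mulrNN mul1r.
rewrite -d.
move: p1 p2; set x1 := (D n 1 m.+1)%:R; set x2 := (D n 1 m.+2)%:R; set y0 := (D n 2 m)%:R; set y1 := (D n 2 m.+1)%:R => p1 p2 /=.
field.
by rewrite p1 p2.
Qed.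

Lemma natzr (x : nat) : (x%:Z)%:~R = x%:R :> rat. Proof. by []. Qed.

Theorem proposition7p7 (F : nat) (n : nat -> nat) :
  (1 <= F)%N ->
  (forall i, (1 <= i <= F)%N -> (0 < n i)%N) ->
  (2 <= n 1)%N ->
  A_F n F = (rk n F 2)%:~R / (rk n F 1)%:~R.
Proof.
move=> hF H _.
have pq : forall a, (1 <= a <= F)%N -> pk n 1 a = (D n 1 a)%:Z /\ qk n 1 a = (D n 1 a.+1)%:Z.
  move=> a ha.
  have [e1 e2] := @pkqk n 1 a (ltac:(lia)) (fun i hi => H i (ltac:(lia))).
  have ea : (a - 1).+1 = a by lia.
  by rewrite e1 e2 ea.
case: F hF H pq => [//|m] _ H pq.
have r1 : (rk n m.+1 1)%:~R = (D n 1 m.+1)%:R + (D n 1 m.+2)%:R :> rat.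
  have [e1 e2] := pq m.+1 (ltac:(lia)).
  by rewrite /rk /= e1 e2 intrD !natzr.
have r2 : (rk n m.+1 2)%:~R = (D n 2 m)%:R + (D n 2 m.+1)%:R :> rat.
  case: m H pq r1 => [|m] H pq r1.
    by rewrite /rk /= add0r.
  have [e1 e2] := @pkqk n 2 m.+2 (ltac:(lia)) (fun i hi => H i (ltac:(lia))).
  have ea : (m.+2 - 2)%N = m by lia.
  by rewrite /rk /= e1 e2 ea intrD !natzr.
rewrite r1 r2 /A_F.
have es : \sum_(1 <= a < m.+1) (-1) ^+ (a + 1) / ((pk n 1 a)%:~R * (qk n 1 a)%:~R)
   = \sum_(1 <= a < m.+1) (-1) ^+ (a + 1) / ((D n 1 a)%:R * (D n 1 a.+1)%:R) :> rat.
  apply: eq_big_nat => a ha.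
  have [e1 e2] := pq a (ltac:(lia)).
  by rewrite e1 e2 !natzr.
rewrite es (@sumD n m); last by move=> i hi; apply: H; lia.
rewrite r1.
have [e1 e2] := pq m.+1 (ltac:(lia)).
rewrite e1 natzr.
have p1 : (D n 1 m.+1)%:R != 0 :> rat.
  rewrite pnatr_eq0 -lt0n; apply: Dpos => i hi; apply: H; lia.
have p2 : (D n 1 m.+2)%:R != 0 :> rat.
  rewrite pnatr_eq0 -lt0n; apply: Dpos => i hi; apply: H; lia.
have p3 : (D n 1 m.+1)%:R + (D n 1 m.+2)%:R != 0 :> rat.
  rewrite -natrD pnatr_eq0 -lt0n addn_gt0; apply/orP; left.
  apply: Dpos => i hi; apply: H; lia.
have d := det n m.
have -> : ((-1) ^+ (m.+1 + 1) : rat) = (-1) ^+ m by rewrite addn1 !exprS mulrA mulrNN mul1r.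
rewrite -d.
move: p1 p2 p3; set x1 := (D n 1 m.+1)%:R; set x2 := (D n 1 m.+2)%:R; set y0 := (D n 2 m)%:R; set y1 := (D n 2 m.+1)%:R => p1 p2 p3.
field.
by rewrite p1 p3.
Qed.
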